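(* Let $n\ge 2$ and let $G=K_n$ on vertices $v_1,\dots,v_n$ with edge weights $w_{\{i,j\}}\in(0,1)$. Then $\operatorname{eptw}(G)=\frac{1}{1-W}$, where $W=\min_{1\le i\le n}\prod_{j\ne i}(1-w_{\{i,j\}})$.
   Context: Let $G$ be a finite simple graph in which each edge $uv$ has a weight $w_{uv}\in(0,1)$. Weighted zero forcing: start with a set $B\subseteq V(G)$ of blue vertices, all other vertices white. In each round, simultaneously, for every blue vertex $u$ that has exactly one white neighbor $v$ (with respect to the coloring at the start of the round), $u$ attempts to force $v$, succeeding with probability $w_{uv}$, all attempts being independent; a white vertex becomes blue at the end of the round if at least one attempt on it succeeds. $B$ is a weighted zero forcing set of $G$ if this process can eventually color all of $V(G)$ blue (equivalently, $B$ is a zero forcing set of the underlying unweighted graph under the standard rule); $\operatorname{Z}(G)$ is the minimum size of such a set. $\operatorname{ptw}(G,B)$ is the random variable giving the round in which the last white vertex becomes blue ($0$ if $B=V(G)$); $\operatorname{eptw}(G,B)=\mathbb{E}[\operatorname{ptw}(G,B)]$; $\operatorname{eptw}(G)=\min\{\operatorname{eptw}(G,B): B$ a weighted zero forcing set with $|B|=\operatorname{Z}(G)\}$. *)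

(* Defs.v *)
From HB Require Import structures.
From mathcomp Require Import all_boot all_order all_algebra.
From mathcomp Require Import all_classical all_reals all_analysis.
Set Implicit Arguments. Unset Strict Implicit. Unset Printing Implicit Defensive.
Import Order.TTheory GRing.Theory Num.Theory.
Local Open Scope ring_scope.

(* A finite simple graph: vertex type V : finType, adjacency e : rel V
   (assumed symmetric and irreflexive where used); edge weights
   w : V -> V -> R (w u v is the weight of edge uv, assumed symmetric). *)

Section ZF.
Variables (V : finType) (e : rel V).

Definition white_nbrs (S : {set V}) (u : V) : {set V} :=
  [set v | e u v & v \notin S].

Definition forces (S : {set V}) (u v : V) : bool :=
  (u \in S) && (white_nbrs S u == [set v]).

Definition zf_step (S : {set V}) : {set V} :=
  S :|: [set v | [exists u, forces S u v]].

Definition zf_closure (B : {set V}) : {set V} := iter #|V| zf_step B.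

Definition is_zfs (B : {set V}) : bool := zf_closure B == [set: V].

Definition Zf : nat := \big[minn/#|V|]_(B : {set V} | is_zfs B) #|B|.

Variables (R : realType) (w : V -> V -> R).

(* probability that the white vertex v is NOT forced in a round starting
   from blue set S (all attempts independent) *)
Definition not_forced (S : {set V}) (v : V) : R :=
  \prod_(u | forces S u v) (1 - w u v).

(* one-round transition probability from blue set S to blue set S' *)
Definition trans (S S' : {set V}) : R :=
  if S \subset S' then
    (\prod_(v in S' :\: S) (1 - not_forced S v)) *
    (\prod_(v in ~: S') not_forced S v)
  else 0.

(* distribution of the blue set at the end of round k, starting from B *)
Fixpoint state_dist (B : {set V}) (k : nat) (S' : {set V}) : R :=
  match k with
  | 0 => (S' == B)%:R
  | k.+1 => \sum_(S : {set V}) state_dist B k S * trans S S'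
  end.

(* P(ptw(G,B) <= k) : V(G) is absorbing *)
Definition ptw_le (B : {set V}) (k : nat) : R := state_dist B k [set: V].

Definition ptw_eq (B : {set V}) (k : nat) : R :=
  ptw_le B k - (if k is k'.+1 then ptw_le B k' else 0).

Definition eptw_set (B : {set V}) : \bar R :=
  (\sum_(0 <= k <oo) ((k%:R * ptw_eq B k)%:E))%E.

Definition eptw : \bar R :=
  \big[Order.min/+oo%E]_(B : {set V} | is_zfs B && (#|B| == Zf)) eptw_set B.

End ZF.

Definition Kn_adj (n : nat) : rel 'I_n := fun i j => i != j.

(* Main.v *)
Require Import Defs.
From HB Require Import structures.
From mathcomp Require Import all_boot all_order all_algebra.
From mathcomp Require Import all_classical all_reals all_analysis.
From mathcomp Require Import ring lra zify.
Import Order.TTheory GRing.Theory Num.Theory.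
Import numFieldNormedType.Exports.
Local Open Scope ring_scope.

Section K.
Variables (n : nat) (R : realType) (w : 'I_n -> 'I_n -> R).
Let e := @Kn_adj n.

Lemma forces_compl (v u : 'I_n) : forces e (~:[set v]) u v = (u != v).
Proof.
rewrite /forces !inE; case: eqP => [->|/eqP uv] //=.
apply/eqP/finset.setP => x; rewrite /white_nbrs !inE /e /Kn_adj.
case: (eqVneq x v) => [->|] //=; rewrite ?andbT ?andbF //.
Qed.

Lemma not_forced_compl (v : 'I_n) :
  not_forced e w (~:[set v]) v = \prod_(u | u != v) (1 - w u v).
Proof. by apply: eq_bigl => u; rewrite forces_compl. Qed.

Lemma trans_full (S' : {set 'I_n}) : trans e w [set: 'I_n] S' = (S' == [set: 'I_n])%:R.
Proof.
rewrite /trans finset.subTset; case: eqP => [->|] //=.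
by rewrite finset.setDv finset.setCT !finset.big_set0 mulr1.
Qed.

Lemma sup_compl (v : 'I_n) (S : {set 'I_n}) : ~:[set v] \subset S -> S = ~:[set v] \/ S = [set: 'I_n].
Proof.
move=> sub; case: (boolP (v \in S)) => vS; [right|left]; apply/finset.setP => x; rewrite !inE.
  case: (eqVneq x v) => [->|xv] //; by move/fintype.subsetP: sub => /(_ x); rewrite !inE xv => ->.
case: (eqVneq x v) => [->|xv] /=; first by rewrite (negbTE vS).
by move/fintype.subsetP: sub => /(_ x); rewrite !inE xv => ->.
Qed.

Lemma compl_neqT (v : 'I_n) : (~:[set v] == [set: 'I_n]) = false.
Proof. by apply/negbTE/eqP => /finset.setP /(_ v); rewrite !inE eqxx. Qed.

Definition qq (v : 'I_n) := \prod_(u | u != v) (1 - w u v).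

Lemma trans_compl (v : 'I_n) (S' : {set 'I_n}) : trans e w (~:[set v]) S' =
  qq v * (S' == ~:[set v])%:R + (1 - qq v) * (S' == [set: 'I_n])%:R.
Proof.
rewrite /trans; case: ifP => sub.
  have [->|->] := sup_compl _ _ sub.
    rewrite eqxx compl_neqT finset.setDv finset.big_set0 mul1r finset.setCK finset.big_set1 not_forced_compl.
    by rewrite /qq mulr1 mulr0 addr0.
  rewrite eqxx eq_sym compl_neqT finset.setTD finset.setCK finset.big_set1 finset.setCT finset.big_set0 mulr1.
  by rewrite not_forced_compl mulr0 add0r mulr1.
have h1 : (S' == ~:[set v]) = false by apply/negbTE; apply: contraFN sub => /eqP ->.
have h2 : (S' == [set: 'I_n]) = false by apply/negbTE; apply: contraFN sub => /eqP ->; exact: finset.subsetT.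
by rewrite h1 h2 !mulr0 addr0.
Qed.

Lemma state_compl (v : 'I_n) k (S' : {set 'I_n}) : state_dist e w (~:[set v]) k S' =
  qq v ^+ k * (S' == ~:[set v])%:R + (1 - qq v ^+ k) * (S' == [set: 'I_n])%:R.
Proof.
elim: k S' => [|k IH] S' /=.
  by rewrite expr0 mul1r subrr mul0r addr0.
rewrite (bigD1 (~:[set v])) //= (bigD1 [set: 'I_n]) /=; last by rewrite eq_sym compl_neqT.
rewrite big1 ?addr0; last first.
  move=> S /andP [h1 h2]; rewrite IH (negbTE h1) (negbTE h2); by rewrite !mulr0 addr0 mul0r.
rewrite !IH eqxx compl_neqT eq_sym compl_neqT eqxx trans_compl trans_full.
rewrite exprS /= !mulr1 !mulr0 !addr0 ?add0r; ring.
Qed.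

Lemma zf_stepT : zf_step e [set: 'I_n] = [set: 'I_n].
Proof. by rewrite /zf_step finset.setTU. Qed.

Lemma exists_neq (v : 'I_n) : (2 <= n)%N -> exists u : 'I_n, u != v.
Proof.
move=> hn; have : (0 < #|~:[set v]|)%N by rewrite cardsC1 card_ord; case: n hn => [|[|]].
by case/card_gt0P => u; rewrite !inE => hu; exists u.
Qed.

Lemma zf_step_compl (v : 'I_n) : (2 <= n)%N -> zf_step e (~:[set v]) = [set: 'I_n].
Proof.
move=> hn; apply/finset.setP => x; rewrite !inE.
case: (eqVneq x v) => [->|] //=.
have [u hu] := exists_neq v hn.
by apply/fintype.existsP; exists u; rewrite forces_compl.
Qed.

Lemma iter_compl (v : 'I_n) k : (2 <= n)%N -> iter k.+1 (zf_step e) (~:[set v]) = [set: 'I_n].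
Proof.
move=> hn; elim: k => [|k IH]; first by rewrite /= zf_step_compl.
by rewrite iterS IH zf_stepT.
Qed.

Lemma zfs_compl (v : 'I_n) : (2 <= n)%N -> is_zfs e (~:[set v]).
Proof.
move=> hn; rewrite /is_zfs /zf_closure card_ord.
by move: (iter_compl v n.-1 hn); rewrite prednK ?(ltnW hn) // => ->.
Qed.

Lemma zf_step_small (B : {set 'I_n}) : (#|B|.+2 <= n)%N -> zf_step e B = B.
Proof.
move=> hB; apply/finset.setP => x; rewrite !inE.
case: (boolP (x \in B)) => //= xB; apply/negbTE/negP; case/fintype.existsP => u /andP [uB /eqP hw].
have : white_nbrs e B u = ~: B.
  apply/finset.setP => y; rewrite !inE /e /Kn_adj.
  case: (eqVneq u y) => [<-|] //=; by rewrite uB.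
move=> hc; move: hw; rewrite hc => /(congr1 (fun A : {set 'I_n} => #|A|)).
rewrite finset.cards1 cardsCs card_ord finset.setCK => h.
by move: hB h; lia.
Qed.

Lemma not_zfs_small (B : {set 'I_n}) : (#|B|.+2 <= n)%N -> ~~ is_zfs e B.
Proof.
move=> hB; rewrite /is_zfs /zf_closure.
have -> : forall k, iter k (zf_step e) B = B.
  by elim=> [|k IH] //=; rewrite IH zf_step_small.
apply/eqP => hT; move: hB; rewrite hT finset.cardsT card_ord.
by move/(leq_trans (leqnSn _)); rewrite ltnn.
Qed.

Lemma bigminn_le (I : eqType) (r : seq I) (P : pred I) (F : I -> nat) x j :
  j \in r -> P j -> (\big[minn/x]_(i <- r | P i) F i <= F j)%N.
Proof.
elim: r => [|a r IH] //= jr Pj; rewrite big_cons.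
move: jr; rewrite inE; case: (eqVneq j a) => [<-|] /= hj.
  by rewrite Pj geq_minl.
case: (P a) => //= jr; last exact: IH.
by rewrite geq_min IH ?orbT.
Qed.

Lemma Zf_Kn : (2 <= n)%N -> Zf e = n.-1.
Proof.
move=> hn; rewrite /Zf card_ord; apply/eqP; rewrite eqn_leq; apply/andP; split.
  have hz := zfs_compl (Ordinal (ltnW hn)) hn.
  apply: leq_trans (@bigminn_le _ _ _ _ _ _ (mem_index_enum _) hz) _.
  by rewrite cardsC1 card_ord.
elim/big_ind: _ => //; first by rewrite leq_pred.
  by move=> x y hx hy; rewrite leq_min hx hy.
move=> B hB; rewrite leqNgt; apply/negP => hlt.
have : (#|B|.+2 <= n)%N by move: hn hlt; lia.
by move/not_zfs_small; rewrite hB.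
Qed.

Lemma zfs_char (B : {set 'I_n}) : (2 <= n)%N ->
  (is_zfs e B && (#|B| == Zf e)) = (B \in [set ~:[set v] | v in [set: 'I_n]]).
Proof.
move=> hn; rewrite Zf_Kn //; apply/idP/idP.
  case/andP => _ /eqP hB.
  have : #|~: B| = 1%N by rewrite cardsCs card_ord finset.setCK hB; move: hn; lia.
  move/eqP/finset.cards1P => -[] => v hv; apply/finset.imsetP; exists v; first by rewrite inE.
  by rewrite -hv finset.setCK.
case/finset.imsetP => v _ ->; by rewrite zfs_compl //= cardsC1 card_ord eqxx.
Qed.

Lemma ptw_eq_compl (v : 'I_n) k : ptw_eq e w (~:[set v]) k =
  if k is k'.+1 then qq v ^+ k' * (1 - qq v) else 0.
Proof.
rewrite /ptw_eq /ptw_le !state_compl eq_sym compl_neqT eqxx !mulr0 !add0r mulr1.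
case: k => [|k]; first by rewrite expr0 subrr subr0.
by rewrite state_compl eq_sym compl_neqT eqxx mulr0 add0r mulr1 exprS; ring.
Qed.
End K.

Section Ser.
Local Open Scope classical_set_scope.
Variables (R : realType) (q : R) (f : nat -> R).
Hypothesis hq : 0 <= q < 1.
Hypothesis hf : forall k, f k = if k is k'.+1 then q ^+ k' * (1 - q) else 0.

Let S N := \sum_(0 <= k < N) k%:R * f k.

Lemma S_rec N : S N.+1 = q * S N + 1 - q ^+ N.
Proof.
rewrite /S; elim: N => [|N IH].
  by rewrite big_nat1 big_geq // hf !mul0r mulr0 add0r expr0 subrr.
rewrite [in RHS]big_nat_recr //= [in LHS]big_nat_recr //= IH !hf.
case: N {IH} => [|N]; rewrite ?mul0r ?addr0 ?expr0 ?exprS; ring.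
Qed.

Lemma S_bound N : S N <= (1 - q)^-1.
Proof.
have q1 : 0 < 1 - q by rewrite subr_gt0; case/andP: hq.
have q0 : 0 <= q by case/andP: hq.
elim: N => [|N IH]; first by rewrite /S big_geq // invr_ge0 ltW.
rewrite S_rec.
have hqN : 0 <= q ^+ N by apply: exprn_ge0.
have : q * S N <= q * (1 - q)^-1 by apply: ler_wpM2l.
have e : (1 - q)^-1 = q * (1 - q)^-1 + 1 by field; rewrite lt0r_neq0.
move=> h; lra.
Qed.

Lemma S_cvg : S @ \oo --> (1 - q)^-1.
Proof.
have q1 : 0 < 1 - q by rewrite subr_gt0; case/andP: hq.
have q0 : 0 <= q by case/andP: hq.
have cS : cvgn S.
  apply: nondecreasing_is_cvgn.
    apply/nondecreasing_seqP => N; rewrite /S big_nat_recr //= lerDl hf.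
    case: N => [|N]; first by rewrite mulr0.
    by rewrite mulr_ge0 // mulr_ge0 // ?exprn_ge0 // ltW.
  by exists (1 - q)^-1 => _ [N _ <-]; exact: S_bound.
have hL : S @ \oo --> limn S by [].
have h1 : (fun N => S N.+1) @ \oo --> limn S by rewrite cvg_shiftS.
have h2 : (fun N => q * S N + 1 - q ^+ N) @ \oo --> q * limn S + 1 - 0.
  apply: cvgB; [apply: cvgD; [exact: cvgMl_tmp | exact: cvg_cst] | apply: cvg_expr].
  by rewrite ger0_norm //; case/andP: hq.
have e : (fun N => S N.+1) = (fun N => q * S N + 1 - q ^+ N).
  by apply: funext => N; rewrite S_rec.
rewrite e in h1; have := cvg_unique (@Rhausdorff R) h1 h2.
move=> hl; have -> : (1 - q)^-1 = limn S; last exact: hL.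
move: hl; rewrite subr0 => hl; apply: (mulIf (lt0r_neq0 q1)).
rewrite mulVf ?lt0r_neq0 //.
have E : limn S * (1 - q) = limn S - q * limn S by ring.
rewrite E; set L := limn S in hl *; have {}hl : L = q * L + 1 by apply: hl. lra.
Qed.

Lemma eseries_val : (\sum_(0 <= k <oo) ((k%:R * f k)%:E))%E = ((1 - q)^-1)%:E.
Proof.
have -> : (fun n => (\sum_(0 <= k < n) (k%:R * f k)%:E)%E) = EFin \o S.
  by apply: funext => N; rewrite /= sumEFin.
rewrite EFin_lim; last by apply/cvg_ex; exists (1 - q)^-1; exact: S_cvg.
by rewrite (cvg_lim _ S_cvg).
Qed.
End Ser.

Theorem mainTheorem2 (R : realType) (n : nat) (w : 'I_n -> 'I_n -> R)
  (hn : (2 <= n)%N)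
  (hsym : forall i j, w i j = w j i)
  (hw : forall i j, i != j -> 0 < w i j < 1) :
  eptw (@Kn_adj n) w =
  ((1 - \big[Num.min/1]_(i < n) \prod_(j < n | j != i) (1 - w i j))^-1)%:E.
Proof.
pose q (i : 'I_n) := \prod_(j < n | j != i) (1 - w i j).
have qqE : forall v, qq _ _ w v = q v.
  by move=> v; apply: eq_bigr => u _; rewrite hsym.
have q0 : forall v, 0 <= q v.
  move=> v; apply: prodr_ge0 => u uv; have uv' : v != u by rewrite eq_sym.
  by case/andP: (hw v u uv') => _ b; rewrite subr_ge0 ltW.
have q1 : forall v, q v < 1.
  move=> v; have [u uv] := @exists_neq _ v hn.
  rewrite /q (bigD1 u) //=.
  have h1 : \prod_(j < n | (j != v) && (j != u)) (1 - w v j) <= 1.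
    apply: prodr_ile1 => j /andP [jv _]; have jv' : v != j by rewrite eq_sym.
    case/andP: (hw v j jv') => a b.
    by apply/andP; split; [rewrite subr_ge0 ltW | rewrite lerBlDr lerDl ltW].
  have h0 : 0 <= \prod_(j < n | (j != v) && (j != u)) (1 - w v j).
    apply: prodr_ge0 => j /andP [jv _]; have jv' : v != j by rewrite eq_sym.
    case/andP: (hw v j jv') => a b.
    by rewrite subr_ge0 ltW.
  have uv' : v != u by rewrite eq_sym.
  case/andP: (hw v u uv') => a b.
  set P := \prod_(_ | _) _ in h1 h0 *.
  have : (1 - w v u) * P <= (1 - w v u) by rewrite -{2}(mulr1 (1 - w v u)) ler_wpM2l // subr_ge0 ltW.
  move=> h; apply: le_lt_trans h _; rewrite ltrBlDr ltrDl //.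
transitivity (\big[Order.min/+oo%E]_(v in [set: 'I_n]) ((1 - q v)^-1)%:E).
  rewrite /eptw (eq_bigl _ _ (fun B => @zfs_char _ B hn)) bigmin_imset.
  apply: eq_bigr => v _; rewrite /eptw_set (@eseries_val _ (q v)).
  - by [].
  - by rewrite q0 q1.
  - by move=> k; rewrite ptw_eq_compl qqE.
have [i0 _ hi0] := @eq_bigmin _ _ 'I_n (1 : R) (Ordinal (ltnW hn)) predT q isT (fun i _ => ltW (q1 i)).
rewrite hi0; apply/eqP; rewrite eq_le; apply/andP; split.
  by apply: bigmin_le_cond; rewrite inE.
apply/bigmin_geP; split; first exact: leey.
move=> v _; rewrite lee_fin lef_pV2 ?posrE ?subr_gt0 ?q1 //.
rewrite lerB // -hi0; exact: bigmin_le.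
Qed.
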